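(* In a finite dynamic game as described in the context, suppose $K^i$ is unilaterally sufficient information for player $i\in\mathcal{I}$. Then for each $j\in\mathcal{I}\setminus\{i\}$ and $t\in\mathcal{T}$ there exist functions $\Pi_t^{j,i,g^{-\{i,j\}}}:\mathcal{K}_t^i\times\mathcal{H}_t^j\times\mathcal{U}_t^i\times\mathcal{U}_t^j\to\Delta(\mathcal{H}_{t+1}^j)$ and $r_t^{i,j,g^{-\{i,j\}}}:\mathcal{K}_t^i\times\mathcal{H}_t^j\times\mathcal{U}_t^i\times\mathcal{U}_t^j\to[-1,1]$, depending on the strategy profile $g$ only through $g^{-\{i,j\}}=(g^l)_{l\notin\{i,j\}}$, such that for all behavioral strategy profiles $g$: (1) $\Pr^g(\tilde h_{t+1}^j\mid h_t^i,h_t^j,u_t^i,u_t^j)=\Pi_t^{j,i,g^{-\{i,j\}}}(\tilde h_{t+1}^j\mid k_t^i,h_t^j,u_t^i,u_t^j)$ for all $t<T$, and (2) $\mathbb{E}^g[R_t^j\mid h_t^i,h_t^j,u_t^i,u_t^j]=r_t^{i,j,g^{-\{i,j\}}}(k_t^i,h_t^j,u_t^i,u_t^j)$ for all $t$, whenever the left-hand sides are well defined (the conditioning event has positive probability).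
   Context: Game model: finite set of players $\mathcal{I}$, times $\mathcal{T}=\{1,\dots,T\}$. At time $t$ each player $i$ takes action $U_t^i\in\mathcal{U}_t^i$, obtains reward $R_t^i\in[-1,1]$ and learns new information $Z_t^i\in\mathcal{Z}_t^i$. There is a state $X_t\in\mathcal{X}_t$ with $(X_{t+1},Z_t,R_t)=f_t(X_t,U_t,W_t)$ for fixed functions $f_t$. Primitive random variables $(X_1,H_1)$ and $W_1,\dots,W_T$ are mutually independent with commonly known distributions. All sets are finite. Perfect recall: $H_t^i=(H_1^i,Z_{1:t-1}^i)\in\mathcal{H}_t^i$, and $U_t^i$ is a component of $Z_t^i$. Behavioral strategy $g_t^i:\mathcal{H}_t^i\to\Delta(\mathcal{U}_t^i)$. A realization is admissible under $g$ if it has positive probability under $g$. Compression: $K_1^i=\iota_1^i(H_1^i)$, $K_t^i=\iota_t^i(K_{t-1}^i,Z_{t-1}^i)$ for fixed maps, finite value sets $\mathcal{K}_t^i$; $k_t^i$ is the compression of $h_t^i$. Unilaterally sufficient information (USI): $K^i$ is USI for player $i$ if there exist $F_t^{i,g^i}:\mathcal{K}_t^i\to\Delta(\mathcal{H}_t^i)$ depending only on $g^i$ and $\Phi_t^{i,g^{-i}}:\mathcal{K}_t^i\to\Delta(\mathcal{X}_t\times\mathcal{H}_t^{-i})$ depending only on $g^{-i}$ with $\Pr^g(x_t,h_t\mid k_t^i)=F_t^{i,g^i}(h_t^i\mid k_t^i)\Phi_t^{i,g^{-i}}(x_t,h_t^{-i}\mid k_t^i)$ for all behavioral profiles $g$,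 all $t$, all $k_t^i$ admissible under $g$ (with $x_t,h_t^i,h_t^{-i}$ ranging independently; the left side is $0$ if they disagree on shared components). *)

(* Defs.v *)
From HB Require Import structures.
From mathcomp Require Import all_boot all_order all_algebra.
From mathcomp Require Import reals.
Set Implicit Arguments. Unset Strict Implicit. Unset Printing Implicit Defensive.
Import Order.TTheory GRing.Theory Num.Theory.
Local Open Scope ring_scope.

Definition is_dist (R : realType) (A : finType) (p : {ffun A -> R}) : Prop :=
  (forall a, 0 <= p a) /\ \sum_(a : A) p a = 1.

(* Times are 0-indexed: t = 0, ..., horizon - 1 correspond to the paper's
   1, ..., T.  Z_t^i is represented as the pair (U_t^i, Y_t^i): the action
   U_t^i is a component of Z_t^i and f_t produces the remaining part Y_t^i.
   The families are indexed by all of nat; only t < horizon (and X_horizon)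
   matter. *)
Record game (R : realType) := Game {
  horizon : nat;
  player : finType;
  X : nat -> finType;
  W : nat -> finType;
  U : nat -> player -> finType;
  Y : nat -> player -> finType;             (* new info besides own action *)
  H1 : player -> finType;
  P0 : {ffun (X 0 * {dffun forall i, H1 i}) -> R};
  PW : forall t, {ffun W t -> R};
  dyn : forall t, X t -> {dffun forall i, U t i} -> W t ->
          (X t.+1 * {dffun forall i, Y t i});
  rew : forall t, X t -> {dffun forall i, U t i} -> W t -> player -> R
}.

Arguments horizon {R}. Arguments player {R}. Arguments X {R}. Arguments W {R}.
Arguments U {R}. Arguments Y {R}. Arguments H1 {R}. Arguments P0 {R}.
Arguments PW {R}. Arguments dyn {R}. Arguments rew {R}.

Section Game.
Variables (R : realType) (G : game R).

Definition valid_game : Prop :=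
  is_dist (P0 G) /\ (forall t, is_dist (PW G t)) /\
  (forall t x u w i, -1 <= rew G t x u w i <= 1).

Definition Zt (t : nat) (i : player G) : finType := (U G t i * Y G t i)%type.

Fixpoint Hist (i : player G) (t : nat) : finType :=
  match t with
  | 0 => H1 G i
  | t'.+1 => (Hist i t' * Zt t' i)%type
  end.

Definition ActProf (t : nat) : finType := {dffun forall i, U G t i}.
Definition HistProf (t : nat) : finType := {dffun forall i, Hist i t}.
Definition HistOthers (i : player G) (t : nat) : finType :=
  {dffun forall j : {j : player G | j != i}, Hist (sval j) t}.

Definition restrict (i : player G) (t : nat) (h : HistProf t) : HistOthers i t :=
  @finfun _ (fun j : {j : player G | j != i} => Hist (sval j) t)
    (fun j => h (sval j)).

Definition next_hist (t : nat) (h : HistProf t) (u : ActProf t)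
    (y : {dffun forall i, Y G t i}) : HistProf t.+1 :=
  @finfun _ (fun i => Hist i t.+1) (fun i => (h i, (u i, y i))).

Definition strategy (i : player G) := forall t, Hist i t -> {ffun U G t i -> R}.
Definition profile := forall i : player G, strategy i.

Definition valid_strategy (i : player G) (s : strategy i) : Prop :=
  forall t h, is_dist (s t h).
Definition valid_profile (g : profile) : Prop :=
  forall i, valid_strategy (g i).

Fixpoint mu (g : profile) (t : nat) : {ffun (X G t * HistProf t) -> R} :=
  match t with
  | 0 => [ffun s : X G 0 * HistProf 0 =>
            P0 G (s.1, @finfun _ (fun i => H1 G i) (fun i => s.2 i))]
  | t'.+1 => [ffun s' : X G t'.+1 * HistProf t'.+1 =>
      \sum_(s : X G t' * HistProf t') \sum_(u : ActProf t') \sum_(w : W G t')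
        (if ((dyn G t' s.1 u w).1, next_hist s.2 u (dyn G t' s.1 u w).2) == s'
         then mu g t' s * (\prod_i g i t' (s.2 i) (u i)) * PW G t' w
         else 0)]
  end.

Definition Ex (g : profile) (t : nat)
    (F : X G t -> HistProf t -> ActProf t -> W G t -> R) : R :=
  \sum_(s : X G t * HistProf t) \sum_(u : ActProf t) \sum_(w : W G t)
    mu g t s * (\prod_i g i t (s.2 i) (u i)) * PW G t w * F s.1 s.2 u w.

Definition ind (b : bool) : R := if b then 1 else 0.

Record compression (i : player G) := Compression {
  K : nat -> finType;
  iota1 : H1 G i -> K 0;
  iotaS : forall t, K t -> Zt t i -> K t.+1
}.

Fixpoint compress (i : player G) (C : compression i) (t : nat) : Hist i t -> K C t :=
  match t return Hist i t -> K C t with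
  | 0 => fun h => iota1 C h
  | t'.+1 => fun h => iotaS (compress C h.1) h.2
  end.

Definition probK (g : profile) (i : player G) (C : compression i) (t : nat)
    (k : K C t) : R :=
  \sum_(s : X G t * HistProf t) mu g t s * ind (compress C (s.2 i) == k).

Definition USI (i : player G) (C : compression i) : Prop :=
  exists (F : forall (s : strategy i) t, K C t -> {ffun Hist i t -> R})
         (Phi : profile -> forall t, K C t -> {ffun (X G t * HistOthers i t) -> R}),
    (forall s t k, valid_strategy s -> is_dist (F s t k)) /\
    (forall g t k, valid_profile g -> is_dist (Phi g t k)) /\
    (forall g g', valid_profile g -> valid_profile g' ->
       (forall l, l != i -> forall t h, g l t h = g' l t h) ->
       forall t k, Phi g t k = Phi g' t k) /\
    (forall g t (k : K C t) (x : X G t) (h : HistProf t),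
       valid_profile g -> (t < horizon G)%N -> 0 < probK g k ->
       mu g t (x, h) * ind (compress C (h i) == k) / probK g k
       = F (g i) t k (h i) * Phi g t k (x, restrict i h)).

Definition cond_ev (i j : player G) (t : nat) (hi : Hist i t) (hj : Hist j t)
    (ui : U G t i) (uj : U G t j) (x : X G t) (h : HistProf t) (u : ActProf t)
    (w : W G t) : bool :=
  [&& h i == hi, h j == hj, u i == ui & u j == uj].

End Game.

Arguments ind {R} b.

(* Main.v *)
Require Import Defs.
From HB Require Import structures.
From mathcomp Require Import all_boot all_order all_algebra.
From mathcomp Require Import reals boolp.
From mathcomp Require Import ring.
Set Implicit Arguments. Unset Strict Implicit. Unset Printing Implicit Defensive.
Import Order.TTheory GRing.Theory Num.Theory.
Local Open Scope ring_scope.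

Section S.
Variables (R : realType) (G : game R).

Lemma ind_ge0 b : 0 <= ind b :> R.
Proof. by case: b => /=; rewrite ?ler01 ?lexx. Qed.
Lemma ind_le1 b : ind b <= 1 :> R.
Proof. by case: b => /=; rewrite ?ler01 ?lexx. Qed.
Lemma ind_andb a b : ind (a && b) = ind a * ind b :> R.
Proof. by case: a; case: b => /=; rewrite ?mulr0 ?mulr1. Qed.

Lemma mu_ge0 (g : profile G) : valid_game G -> valid_profile g ->
  forall t s, 0 <= mu g t s.
Proof.
move=> [[P0g _] [PWg _]] vg; elim=> [|t IH] s /=; rewrite ffunE; first exact: P0g.
apply: sumr_ge0 => s0 _; apply: sumr_ge0 => u _; apply: sumr_ge0 => w _.
case: ifP => _ //; apply: mulr_ge0; last by case: (PWg t).
apply: mulr_ge0 => //; apply: prodr_ge0 => l _; by case: (vg l t (s0.2 l)).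
Qed.

Fixpoint Q (g : profile G) (l : player G) (t : nat) : Hist l t -> R :=
  match t return Hist l t -> R with
  | 0 => fun _ => 1
  | t'.+1 => fun h => @Q g l t' h.1 * g l t' h.1 h.2.1
  end.
Arguments Q g l t h : clear implicits.

Definition one_prof : profile G := fun l t h => [ffun _ => 1].

Lemma mu_fact g t s : mu g t s = (\prod_l Q g l t (s.2 l)) * mu one_prof t s.
Proof.
elim: t s => [|t IH] s /=; first by rewrite !ffunE big1 ?mul1r.
rewrite !ffunE mulr_sumr; apply: eq_bigr => s0 _; rewrite mulr_sumr.
apply: eq_bigr => u _; rewrite mulr_sumr; apply: eq_bigr => w _.
case: eqP => [<-|_]; last by rewrite mulr0.
rewrite IH /=.
under [X in _ = X * _]eq_bigr => l _ do rewrite ffunE /=.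
rewrite big_split /= [X in _ = _ * (_ * X * _)]big1 ?mulr1; last by move=> l _; rewrite ffunE.
by rewrite -!mulrA; congr (_ * _); rewrite mulrCA.
Qed.

Section Join.
Variables (i : player G) (t : nat).

Lemma neq_helper (l : player G) : i <> l -> l != i.
Proof. by move=> ne; apply/eqP => e; apply: ne. Qed.

Definition join (a : Hist i t) (b : HistOthers i t) : HistProf G t :=
  @finfun _ (fun l => Hist l t) (fun l =>
    match i =P l with
    | ReflectT e => eq_rect i (fun l => Hist l t) a l e
    | ReflectF ne => b (@exist _ (fun j => j != i) l (neq_helper ne))
    end).

Lemma join_i a b : join a b i = a.
Proof.
rewrite /join ffunE; destruct (i =P i) as [e|ne]; last by case: ne.
by rewrite (eq_axiomK e).
Qed.

Lemma restrict_join a b : restrict i (join a b) = b.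
Proof.
apply/ffunP => jj; rewrite /restrict /join !ffunE.
destruct (i =P sval jj) as [e|ne].
  by exfalso; move: (valP jj) => /=; rewrite -e eqxx.
by case: jj ne => l pl ne /=; rewrite (bool_irrelevance (neq_helper ne) pl).
Qed.

Lemma join_restrict a (h : HistProf G t) : h i = a -> join a (restrict i h) = h.
Proof.
move=> hia; apply/ffunP => l; rewrite /join /restrict !ffunE.
destruct (i =P l) as [e|ne]; last by rewrite ffunE.
by case: l / e; rewrite hia.
Qed.

Lemma sum_fix_i (a : Hist i t) (f : HistProf G t -> R) :
  \sum_(h : HistProf G t) ind (h i == a) * f h = \sum_b f (join a b).
Proof.
rewrite (eq_bigr (fun h : HistProf G t => if h i == a then f h else 0)); last first.
  by move=> h _; case: eqP => _ /=; rewrite ?mul1r ?mul0r.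
rewrite -big_mkcond (reindex_onto (join a) (@restrict R G i t)); last first.
  by move=> h /eqP; apply: join_restrict.
by apply: eq_bigl => b; rewrite restrict_join join_i !eqxx.
Qed.

Lemma sum_swap_i (a a' : Hist i t) (f : HistProf G t -> R) :
  (forall h h' : HistProf G t, restrict i h = restrict i h' -> f h = f h') ->
  \sum_(h : HistProf G t) ind (h i == a) * f h = \sum_(h : HistProf G t) ind (h i == a') * f h.
Proof.
move=> fr; rewrite !sum_fix_i; apply: eq_bigr => b _; apply: fr.
by rewrite !restrict_join.
Qed.
End Join.

Lemma dist_inhab (A : finType) (p : {ffun A -> R}) : is_dist p -> exists a : A, True.
Proof.
move=> [_ s1]; case: (pickP (@predT A)) => [a _|e]; first by exists a.
by move: s1; rewrite big_pred0 // => /eqP; rewrite eq_sym oner_eq0.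
Qed.

Lemma restrict_eq_l (i : player G) t (h h' : HistProf G t) l :
  restrict i h = restrict i h' -> l != i -> h l = h' l.
Proof.
move=> e li.
have := congr1 (fun f : HistOthers i t => f (exist (fun j => j != i) l li)) e.
by rewrite /restrict !ffunE.
Qed.

Lemma Q_ext (g g' : profile G) l : (forall t h, g l t h = g' l t h) ->
  forall t h, Q g l t h = Q g' l t h.
Proof. by move=> e; elim=> [|t IH] h //=; rewrite IH e. Qed.

Lemma eq_Ex (g : profile G) t (F1 F2 : X G t -> HistProf G t -> ActProf G t -> W G t -> R) :
  (forall x h u w, F1 x h u w = F2 x h u w) -> Ex g F1 = Ex g F2.
Proof.
move=> e; apply: eq_bigr => s _; apply: eq_bigr => u _; apply: eq_bigr => w _.
by rewrite e.
Qed.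

Lemma sum_ind_eq (A : finType) (v : A) : \sum_(a : A) ind (v == a) = 1 :> R.
Proof.
rewrite (bigD1 v) //= eqxx big1 ?addr0 // => a av.
by rewrite eq_sym (negbTE av).
Qed.

Section Main.
Variables (i : player G) (C : compression i) (j : player G) (hji : j != i).

Definition E (g : profile G) t (hi : Hist i t) (hj : Hist j t) (ui : U G t i) (uj : U G t j)
  (phi : X G t -> HistProf G t -> ActProf G t -> W G t -> R) : R :=
  Ex g (fun x h u w => ind (cond_ev hi hj ui uj x h u w) * phi x h u w).

Definition one_phi t : X G t -> HistProf G t -> ActProf G t -> W G t -> R :=
  fun _ _ _ _ => 1.

Definition Ep (g : profile G) t (hi : Hist i t) (hj : Hist j t) (ui : U G t i) (uj : U G t j)
  (phi : X G t -> HistProf G t -> ActProf G t -> W G t -> R) : R :=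
  \sum_(s : X G t * HistProf G t) \sum_(u : ActProf G t) \sum_(w : W G t)
    ind (cond_ev hi hj ui uj s.1 s.2 u w) *
    (\prod_(l | (l != i) && (l != j)) (Q g l t (s.2 l) * g l t (s.2 l) (u l))) *
    mu one_prof t s * PW G t w * phi s.1 s.2 u w.

Lemma E_fact g t hi hj ui uj phi :
  E g hi hj ui uj phi =
  (Q g i t hi * g i t hi ui) * (Q g j t hj * g j t hj uj) * @Ep g t hi hj ui uj phi.
Proof.
rewrite /E /Ex /Ep !mulr_sumr; apply: eq_bigr => s _; rewrite !mulr_sumr.
apply: eq_bigr => u _; rewrite !mulr_sumr; apply: eq_bigr => w _.
have [/and4P[/eqP Hi /eqP Hj /eqP Ui /eqP Uj]|nc] := boolP (cond_ev hi hj ui uj s.1 s.2 u w);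
  last by rewrite /ind !(mul0r, mulr0).
rewrite /ind /= mu_fact.
have HP : (\prod_l Q g l t (s.2 l)) * (\prod_l g l t (s.2 l) (u l)) =
  (Q g i t hi * g i t hi ui) * (Q g j t hj * g j t hj uj) *
  \prod_(l | (l != i) && (l != j)) (Q g l t (s.2 l) * g l t (s.2 l) (u l)).
  rewrite -big_split /= (bigD1 i) //= (bigD1 j) /=; last exact: hji.
  by rewrite Hi Hj Ui Uj mulrA.
rewrite (mulrAC (\prod_l _)) HP; ring.
Qed.

Lemma Ep_ext g g' t hi hj ui uj phi :
  (forall l, l != i -> l != j -> forall t h, g l t h = g' l t h) ->
  @Ep g t hi hj ui uj phi = @Ep g' t hi hj ui uj phi.
Proof.
move=> ag; apply: eq_bigr => s _; apply: eq_bigr => u _; apply: eq_bigr => w _.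
congr (_ * _ * _ * _ * _); apply: eq_bigr => l /andP[li lj].
by rewrite (Q_ext (ag l li lj)) ag.
Qed.


Lemma cancel_div (c a b : R) : c != 0 -> (c * a) / (c * b) = a / b.
Proof. by move=> c0; rewrite invfM mulrACA mulfV ?mul1r. Qed.

Lemma E_zero g t hi hj ui uj phi :
  (forall s : X G t * HistProf G t, s.2 i = hi -> mu g t s = 0) ->
  @E g t hi hj ui uj phi = 0.
Proof.
move=> z; apply: big1 => s _; apply: big1 => u _; apply: big1 => w _.
rewrite /cond_ev; case: (s.2 i =P hi) => [/z ->|_]; first by rewrite !mul0r.
by rewrite /ind /= !(mul0r, mulr0).
Qed.

Lemma E_ge0 g t hi hj ui uj phi : valid_game G -> valid_profile g ->
  (forall x h u w, 0 <= phi x h u w) -> 0 <= @E g t hi hj ui uj phi.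
Proof.
move=> vG vg p0; have [_ [PWg _]] := vG.
apply: sumr_ge0 => s _; apply: sumr_ge0 => u _; apply: sumr_ge0 => w _.
apply: mulr_ge0; last by apply: mulr_ge0; [exact: ind_ge0|exact: p0].
apply: mulr_ge0; last by case: (PWg t).
apply: mulr_ge0; first exact: mu_ge0.
by apply: prodr_ge0 => l _; case: (vg l t (s.2 l)).
Qed.

Lemma usi_step g t (hi hi' : Hist i t) hj ui uj phi :
  valid_game G -> USI C -> valid_profile g ->
  (forall h h', g i t h = g i t h') -> (t < horizon G)%N ->
  compress C hi = compress C hi' ->
  @E g t hi hj ui uj (@one_phi t) != 0 -> @E g t hi' hj ui uj (@one_phi t) != 0 ->
  (forall x h h' u w, restrict i h = restrict i h' -> phi x h u w = phi x h' u w) ->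
  @E g t hi hj ui uj phi / @E g t hi hj ui uj (@one_phi t) =
  @E g t hi' hj ui uj phi / @E g t hi' hj ui uj (@one_phi t).
Proof.
move=> vG usi vg gic ht hk E1 E2 phir.
case: usi => F [Phi [_ [_ [_ Huse]]]].
set k := compress C hi.
set pK := probK g k.
have pK_ge0 : 0 <= pK.
  by apply: sumr_ge0 => s _; apply: mulr_ge0; [exact: mu_ge0|exact: ind_ge0].
have pK_gt0 : 0 < pK.
  rewrite lt_def pK_ge0 andbT; apply/eqP => pK0; move/eqP: E1; apply.
  apply: E_zero => s si.
  have := @psumr_eq0P _ _ _ _ _ pK0 s isT; rewrite /k -si eqxx /ind mulr1; apply.
  by move=> s' _; apply: mulr_ge0; [exact: mu_ge0|exact: ind_ge0].
have Emu : forall a, compress C a = k -> forall x (h : HistProf G t), h i = a ->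
    mu g t (x, h) = pK * F (g i) t k a * Phi g t k (x, restrict i h).
  move=> a ak x h hia; have := Huse g t k x h vg ht pK_gt0.
  rewrite hia ak eqxx /ind mulr1 => e.
  by rewrite -mulrA -e mulrC divfK // gt_eqF.
pose T (ph : X G t -> HistProf G t -> ActProf G t -> W G t -> R) x (h : HistProf G t) :=
  \sum_(u : ActProf G t) \sum_(w : W G t)
    ind (h j == hj) * ind (u i == ui) * ind (u j == uj) *
    Phi g t k (x, restrict i h) * (\prod_l g l t (h l) (u l)) * PW G t w * ph x h u w.
have ET : forall a ph, compress C a = k ->
    @E g t a hj ui uj ph =
    pK * F (g i) t k a * \sum_(x : X G t) \sum_(h : HistProf G t) ind (h i == a) * T ph x h.
  move=> a ph ak; rewrite mulr_sumr.
  under [RHS]eq_bigr do rewrite mulr_sumr.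
  rewrite pair_big /=; apply: eq_bigr => [[x h]] _ /=.
  have [hia|hna] := eqVneq (h i) a.
    rewrite (Emu a ak x h hia) /T !mulr_sumr; apply: eq_bigr => u _.
    rewrite !mulr_sumr; apply: eq_bigr => w _.
    rewrite /cond_ev /= hia eqxx /= !ind_andb /ind /=; ring.
  rewrite [ind false]/ind mul0r mulr0; apply: big1 => u _; apply: big1 => w _.
  by rewrite /cond_ev /= (negbTE hna) /= !(mul0r, mulr0).
have Tr : forall ph x h h', restrict i h = restrict i h' ->
    (forall x h h' u w, restrict i h = restrict i h' -> ph x h u w = ph x h' u w) ->
    T ph x h = T ph x h'.
  move=> ph x h h' e phr; apply: eq_bigr => u _; apply: eq_bigr => w _.
  rewrite (restrict_eq_l e hji) e (phr x h h' u w e).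
  congr (_ * _ * _ * _); apply: eq_bigr => l _.
  have [->|li] := eqVneq l i; first by rewrite (gic (h i) (h' i)).
  by rewrite (restrict_eq_l e li).
have Sw : forall ph, (forall x h h' u w, restrict i h = restrict i h' -> ph x h u w = ph x h' u w) ->
    \sum_(x : X G t) \sum_(h : HistProf G t) ind (h i == hi') * T ph x h =
    \sum_(x : X G t) \sum_(h : HistProf G t) ind (h i == hi) * T ph x h.
  move=> ph phr; apply: eq_bigr => x _; apply: sum_swap_i => h h' e.
  exact: Tr.
have one_r : forall x h h' u w, restrict i h = restrict i h' ->
    @one_phi t x h u w = @one_phi t x h' u w by [].
move: E1 E2; rewrite (ET hi) // (ET hi') -?hk // (ET hi) // (ET hi') -?hk //.
rewrite !Sw // => E1 E2.
rewrite cancel_div; last by move: E1; rewrite mulf_eq0 negb_or => /andP[].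
rewrite cancel_div //; by move: E2; rewrite mulf_eq0 negb_or => /andP[].
Qed.


Definition unif (l : player G) : strategy l :=
  fun t _ => [ffun _ => (#|U G t l|%:R)^-1].
Arguments unif : clear implicits.

Definition g3 (g : profile G) : profile G :=
  fun l => if (l == i) || (l == j) then unif l else g l.

Lemma card_U_pos (g : profile G) : valid_profile g -> forall l t (h : Hist l t), (0 < #|U G t l|)%N.
Proof.
move=> vg l t h; have [u _] := dist_inhab (vg l t h).
by apply/card_gt0P; exists u.
Qed.

Lemma unif_pos (g : profile G) : valid_profile g -> forall l t (h : Hist l t) u, 0 < unif l t h u.
Proof.
move=> vg l t h u; rewrite ffunE invr_gt0 ltr0n; exact: (@card_U_pos g vg l t h).
Qed.

Lemma valid_g3 (g : profile G) : valid_profile g -> valid_profile (g3 g).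
Proof.
move=> vg l; rewrite /g3; case: ifP => _; last exact: vg.
move=> t h; split; first by move=> u; apply: ltW; exact: (@unif_pos g vg l t h u).
rewrite (eq_bigr (fun _ => (#|U G t l|%:R)^-1)); last by move=> u _; rewrite ffunE.
rewrite sumr_const.
rewrite cardT -cardE.
rewrite -[_ *+ _]mulr_natr mulVf // pnatr_eq0 -lt0n.
exact: (@card_U_pos g vg l t h).
Qed.

Lemma Q_g3_pos (g : profile G) : valid_profile g -> forall l, (l == i) || (l == j) ->
  forall t h, 0 < Q (g3 g) l t h.
Proof.
move=> vg l lij; elim=> [|t IH] h /=; first exact: ltr01.
rewrite mulr_gt0 // /g3 lij; exact: (@unif_pos g vg l t h.1).
Qed.

Arguments g3 : clear implicits.
Lemma g3_agree (g : profile G) : forall l, l != i -> l != j -> forall t (h : Hist l t), g3 g l t h = g l t h.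
Proof. by move=> l li lj t h; rewrite /g3 (negbTE li) (negbTE lj). Qed.

Lemma E_ratio_Ep (g : profile G) t hi hj ui uj phi :
  @E g t hi hj ui uj (@one_phi t) != 0 ->
  @E g t hi hj ui uj phi / @E g t hi hj ui uj (@one_phi t) =
  @Ep g t hi hj ui uj phi / @Ep g t hi hj ui uj (@one_phi t).
Proof.
rewrite !E_fact => nz; rewrite cancel_div //.
by move: nz; rewrite mulf_eq0 negb_or => /andP[].
Qed.

Lemma invariance (g g' : profile G) t (hi hi' : Hist i t) hj ui uj phi :
  valid_game G -> USI C -> valid_profile g -> valid_profile g' ->
  (forall l, l != i -> l != j -> forall t h, g l t h = g' l t h) ->
  (t < horizon G)%N -> compress C hi = compress C hi' ->
  0 < @E g t hi hj ui uj (@one_phi t) -> 0 < @E g' t hi' hj ui uj (@one_phi t) ->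
  (forall x h h' u w, restrict i h = restrict i h' -> phi x h u w = phi x h' u w) ->
  @E g t hi hj ui uj phi / @E g t hi hj ui uj (@one_phi t) =
  @E g' t hi' hj ui uj phi / @E g' t hi' hj ui uj (@one_phi t).
Proof.
move=> vG usi vg vg' ag ht hk P1 P2 phir.
have vg3 := valid_g3 vg.
have ag3 : forall l, l != i -> l != j -> forall t h, g3 g l t h = g l t h := g3_agree g.
have ag3' : forall l, l != i -> l != j -> forall t h, g3 g l t h = g' l t h.
  by move=> l li lj t0 h; rewrite ag3 // ag.
have c3 : forall a b,
    (Q (g3 g) i t a * g3 g i t a ui) * (Q (g3 g) j t b * g3 g j t b uj) != 0.
  move=> a b; rewrite gt_eqF // !mulr_gt0 //.
  - by apply: Q_g3_pos; rewrite // eqxx.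
  - by rewrite /g3 eqxx /=; exact: unif_pos.
  - by apply: Q_g3_pos; rewrite // eqxx orbT.
  - by rewrite /g3 eqxx orbT; exact: unif_pos.
have nzE1 := lt0r_neq0 P1; have nzE2 := lt0r_neq0 P2.
have nzEp1 : @Ep g t hi hj ui uj (@one_phi t) != 0.
  by move: nzE1; rewrite E_fact mulf_eq0 negb_or => /andP[].
have nzEp2 : @Ep g' t hi' hj ui uj (@one_phi t) != 0.
  by move: nzE2; rewrite E_fact mulf_eq0 negb_or => /andP[].
have n3 : @E (g3 g) t hi hj ui uj (@one_phi t) != 0.
  by rewrite E_fact mulf_neq0 // (Ep_ext _ _ _ _ _ ag3).
have n3' : @E (g3 g) t hi' hj ui uj (@one_phi t) != 0.
  by rewrite E_fact mulf_neq0 // (Ep_ext _ _ _ _ _ ag3').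
rewrite (E_ratio_Ep phi nzE1) (E_ratio_Ep phi nzE2).
rewrite -(Ep_ext _ _ _ _ _ ag3) -(Ep_ext _ _ _ _ (@one_phi t) ag3).
rewrite -(Ep_ext _ _ _ _ _ ag3') -(Ep_ext _ _ _ _ (@one_phi t) ag3').
rewrite -(E_ratio_Ep phi n3) -(E_ratio_Ep phi n3').
apply: usi_step => //.
by move=> h h'; rewrite /g3 eqxx.
Qed.


Lemma inhab_state (g : profile G) : valid_game G -> valid_profile g ->
  forall t, exists s : X G t * HistProf G t, True.
Proof.
move=> [P0d [PWd _]] vg; elim=> [|t [s _]].
  have [p _] := dist_inhab P0d.
  by exists (p.1, @finfun _ (fun l => Hist l 0) (fun l => p.2 l)).
have H : forall l, exists u : U G t l, True := fun l => dist_inhab (vg l t (s.2 l)).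
have [uf _] := @fin_all_exists _ (fun l => U G t l) (fun _ _ => True) H.
pose u : ActProf G t := @finfun _ (fun l => U G t l) uf.
have [w _] := dist_inhab (PWd t).
by exists ((dyn G t s.1 u w).1, next_hist s.2 u (dyn G t s.1 u w).2).
Qed.

Lemma inhab_Y (g : profile G) : valid_game G -> valid_profile g ->
  forall t l, exists y : Y G t l, True.
Proof.
move=> vG vg t l; have [s _] := inhab_state vG vg t.
have [_ [PWd _]] := vG.
have H : forall l, exists u : U G t l, True := fun l => dist_inhab (vg l t (s.2 l)).
have [uf _] := @fin_all_exists _ (fun l => U G t l) (fun _ _ => True) H.
pose u : ActProf G t := @finfun _ (fun l => U G t l) uf.
have [w _] := dist_inhab (PWd t).
by exists ((dyn G t s.1 u w).2 l).
Qed.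

Definition phi1 t (hj' : Hist j t.+1) : X G t -> HistProf G t -> ActProf G t -> W G t -> R :=
  fun x h u w => ind (next_hist h u (dyn G t x u w).2 j == hj').

Definition phirw t : X G t -> HistProf G t -> ActProf G t -> W G t -> R :=
  fun x h u w => rew G t x u w j.

Definition agree_ij (g g' : profile G) :=
  forall l, l != i -> l != j -> forall t (h : Hist l t), g l t h = g' l t h.

Definition wit (g : profile G) t (k : K C t) (hj : Hist j t) (ui : U G t i) (uj : U G t j)
  (p : profile G * Hist i t) : Prop :=
  [/\ (t < horizon G)%N, valid_profile p.1, agree_ij g p.1, compress C p.2 = k &
      0 < @E p.1 t p.2 hj ui uj (@one_phi t)].

Definition ratio t (p : profile G * Hist i t) (hj : Hist j t) (ui : U G t i) (uj : U G t j)
  phi : R :=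
  @E p.1 t p.2 hj ui uj phi / @E p.1 t p.2 hj ui uj (@one_phi t).

Definition dflt t (hj : Hist j t) (uj : U G t j) : {ffun Hist j t.+1 -> R} :=
  if [pick y : Y G t j] is Some y then
    [ffun h' : Hist j t.+1 => ind (h' == ((hj, (uj, y)) : Hist j t.+1))]
  else 0.

Definition Pi_def (g : profile G) t (k : K C t) (hj : Hist j t) (ui : U G t i) (uj : U G t j) :
  {ffun Hist j t.+1 -> R} :=
  match pselect (exists p, wit g k hj ui uj p) with
  | left ex => [ffun hj' => ratio (projT1 (cid ex)) hj ui uj (phi1 hj')]
  | right _ => dflt hj uj
  end.

Definition r_def (g : profile G) t (k : K C t) (hj : Hist j t) (ui : U G t i) (uj : U G t j) : R :=
  match pselect (exists p, wit g k hj ui uj p) with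
  | left ex => ratio (projT1 (cid ex)) hj ui uj (@phirw t)
  | right _ => 0
  end.

Lemma phi1_ok t (hj' : Hist j t.+1) :
  forall x h h' u w, restrict i h = restrict i h' -> phi1 hj' x h u w = phi1 hj' x h' u w.
Proof.
move=> x h h' u w e; rewrite /phi1 /next_hist !ffunE.
by rewrite (restrict_eq_l e hji).
Qed.

Lemma phirw_ok t :
  forall x h h' u w, restrict i h = restrict i h' -> @phirw t x h u w = @phirw t x h' u w.
Proof. by []. Qed.

Lemma wit_transfer g g' t k hj ui uj p : agree_ij g g' ->
  @wit g t k hj ui uj p -> @wit g' t k hj ui uj p.
Proof.
move=> ag [h1 h2 h3 h4 h5]; split=> // l li lj t0 h.
by rewrite -ag // h3.
Qed.

Lemma wit_ratio_eq g g' t k hj ui uj p p' phi :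
  valid_game G -> USI C -> agree_ij g g' ->
  @wit g t k hj ui uj p -> @wit g' t k hj ui uj p' ->
  (forall x h h' u w, restrict i h = restrict i h' -> phi x h u w = phi x h' u w) ->
  ratio p hj ui uj phi = ratio p' hj ui uj phi.
Proof.
move=> vG usi ag [h1 h2 h3 h4 h5] [h1' h2' h3' h4' h5'] phir.
apply: invariance => //; last by rewrite h4 h4'.
by move=> l li lj t0 h; rewrite -h3 // -h3' // ag.
Qed.


Lemma E_le (g : profile G) t hi hj ui uj phi1' phi2 : valid_game G -> valid_profile g ->
  (forall x h u w, phi1' x h u w <= phi2 x h u w) ->
  @E g t hi hj ui uj phi1' <= @E g t hi hj ui uj phi2.
Proof.
move=> vG vg le; have [_ [PWg _]] := vG.
apply: ler_sum => s _; apply: ler_sum => u _; apply: ler_sum => w _.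
apply: ler_wpM2l; last by apply: ler_wpM2l; [exact: ind_ge0|exact: le].
apply: mulr_ge0; last by case: (PWg t).
apply: mulr_ge0; first exact: mu_ge0.
by apply: prodr_ge0 => l _; case: (vg l t (s.2 l)).
Qed.

Lemma E_scale (g : profile G) t hi hj ui uj (c : R) phi :
  @E g t hi hj ui uj (fun x h u w => c * phi x h u w) = c * @E g t hi hj ui uj phi.
Proof.
rewrite /E /Ex mulr_sumr; apply: eq_bigr => s _; rewrite mulr_sumr.
apply: eq_bigr => u _; rewrite mulr_sumr; apply: eq_bigr => w _; ring.
Qed.

Lemma E_sum_phi1 (g : profile G) t hi hj ui uj :
  \sum_(hj' : Hist j t.+1) @E g t hi hj ui uj (phi1 hj') = @E g t hi hj ui uj (@one_phi t).
Proof.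
rewrite /E /Ex exchange_big; apply: eq_bigr => s _.
rewrite exchange_big; apply: eq_bigr => u _.
rewrite exchange_big; apply: eq_bigr => w _.
rewrite -mulr_sumr -mulr_sumr /phi1 /one_phi.
by rewrite (eq_bigr (fun a => ind (next_hist s.2 u (dyn G t s.1 u w).2 j == a))) ?sum_ind_eq.
Qed.

Lemma main : valid_game G -> USI C ->
  exists (Pi : profile G -> forall t, K C t -> Hist j t -> U G t i -> U G t j ->
                 {ffun Hist j t.+1 -> R})
         (r : profile G -> forall t, K C t -> Hist j t -> U G t i -> U G t j -> R),
    (forall g g', valid_profile g -> valid_profile g' ->
       (forall l, l != i -> l != j -> forall t h, g l t h = g' l t h) ->
       forall t k hj ui uj, Pi g t k hj ui uj = Pi g' t k hj ui uj /\
                             r g t k hj ui uj = r g' t k hj ui uj) /\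
    (forall g t k hj ui uj, valid_profile g ->
       ((t.+1 < horizon G)%N -> is_dist (Pi g t k hj ui uj)) /\
       ((t < horizon G)%N -> -1 <= r g t k hj ui uj <= 1)) /\
    (forall g, valid_profile g ->
      (forall t (hi : Hist i t) (hj : Hist j t) (ui : U G t i) (uj : U G t j)
              (hj' : Hist j t.+1),
         (t.+1 < horizon G)%N ->
         0 < Ex g (fun x h u w => ind (cond_ev hi hj ui uj x h u w)) ->
         Ex g (fun x h u w => ind (cond_ev hi hj ui uj x h u w &&
                   (next_hist h u (dyn G t x u w).2 j == hj')))
           / Ex g (fun x h u w => ind (cond_ev hi hj ui uj x h u w))
         = Pi g t (compress C hi) hj ui uj hj') /\
      (forall t (hi : Hist i t) (hj : Hist j t) (ui : U G t i) (uj : U G t j),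
         (t < horizon G)%N ->
         0 < Ex g (fun x h u w => ind (cond_ev hi hj ui uj x h u w)) ->
         Ex g (fun x h u w => ind (cond_ev hi hj ui uj x h u w) * rew G t x u w j)
           / Ex g (fun x h u w => ind (cond_ev hi hj ui uj x h u w))
         = r g t (compress C hi) hj ui uj)).
Proof.
move=> vG usi; exists Pi_def, r_def; split; last split.
- move=> g g' vg vg' ag t k hj ui uj; rewrite /Pi_def /r_def.
  case: pselect => [ex|nex]; case: pselect => [ex'|nex'].
  + split; last by apply: (wit_ratio_eq vG usi ag (projT2 (cid ex)) (projT2 (cid ex'))).
    apply/ffunP => hj'; rewrite !ffunE.
    exact: (wit_ratio_eq vG usi ag (projT2 (cid ex)) (projT2 (cid ex')) (@phi1_ok t hj')).
  + by exfalso; apply: nex'; case: ex => p wp; exists p; apply: wit_transfer wp.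
  + exfalso; apply: nex; case: ex' => p wp; exists p; apply: wit_transfer wp.
    by move=> l li lj t0 h; rewrite ag.
  + by [].
- move=> g t k hj ui uj vg; split => ht; rewrite /Pi_def /r_def.
  + case: pselect => [ex|nex].
      case: (projT2 (cid ex)) => _ vp _ _ Epos.
      split.
        move=> hj'; rewrite ffunE; apply: divr_ge0; apply: E_ge0 => // *.
        exact: ind_ge0.
      under eq_bigr do rewrite ffunE.
      by rewrite /ratio -mulr_suml E_sum_phi1 mulfV // gt_eqF.
    rewrite /dflt; case: pickP => [y _|none]; last first.
      by exfalso; have [y _] := inhab_Y vG vg t j; move: (none y).
    split; first by move=> h'; rewrite ffunE; exact: ind_ge0.
    under eq_bigr do rewrite ffunE eq_sym.
    exact: sum_ind_eq.
  + case: pselect => [ex|nex]; last by rewrite oppr_le0 ler01.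
    case: (projT2 (cid ex)) => _ vp _ _ Epos.
    have [_ [_ rb]] := vG.
    rewrite /ratio ler_pdivlMr // ler_pdivrMr // mulN1r.
    rewrite -[X in X <= _ <= _]mulN1r -E_scale mul1r; apply/andP; split.
      by apply: E_le => // x h u w; rewrite /one_phi /phirw mulr1; case/andP: (rb t x u w j).
    by apply: E_le => // x h u w; rewrite /one_phi /phirw; case/andP: (rb t x u w j).
- move=> g vg; split.
  + move=> t hi hj ui uj hj' ht Epos.
    have eN : Ex g (fun x h u w => ind (cond_ev hi hj ui uj x h u w &&
                   (next_hist h u (dyn G t x u w).2 j == hj'))) = @E g t hi hj ui uj (phi1 hj').
      by apply: eq_Ex => x h u w; rewrite ind_andb.
    have eD : Ex g (fun x h u w => ind (cond_ev hi hj ui uj x h u w)) =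
              @E g t hi hj ui uj (@one_phi t).
      by apply: eq_Ex => x h u w; rewrite /one_phi mulr1.
    rewrite eN eD; rewrite eD in Epos.
    have wg : wit g (compress C hi) hj ui uj (g, hi) by split => //; exact: ltnW.
    rewrite /Pi_def; case: pselect => [ex|nex]; last by exfalso; apply: nex; exists (g, hi).
    rewrite ffunE.
    have ag : agree_ij g g by [].
    exact: (wit_ratio_eq vG usi ag wg (projT2 (cid ex)) (@phi1_ok t hj')).
  + move=> t hi hj ui uj ht Epos.
    have eD : Ex g (fun x h u w => ind (cond_ev hi hj ui uj x h u w)) =
              @E g t hi hj ui uj (@one_phi t).
      by apply: eq_Ex => x h u w; rewrite /one_phi mulr1.
    rewrite eD; rewrite eD in Epos.
    have wg : wit g (compress C hi) hj ui uj (g, hi) by split.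
    rewrite /r_def; case: pselect => [ex|nex]; last by exfalso; apply: nex; exists (g, hi).
    have ag : agree_ij g g by [].
    exact: (wit_ratio_eq vG usi ag wg (projT2 (cid ex)) (@phirw_ok t)).
Qed.

End Main.
End S.

Theorem lemma8 (R : realType) (G : game R) (i : player G) (C : compression i) :
  valid_game G -> USI C ->
  forall j : player G, j != i ->
  exists (Pi : profile G -> forall t, K C t -> Hist j t -> U G t i -> U G t j ->
                 {ffun Hist j t.+1 -> R})
         (r : profile G -> forall t, K C t -> Hist j t -> U G t i -> U G t j -> R),
    (* dependence on g only through g^{-{i,j}} *)
    (forall g g', valid_profile g -> valid_profile g' ->
       (forall l, l != i -> l != j -> forall t h, g l t h = g' l t h) ->
       forall t k hj ui uj, Pi g t k hj ui uj = Pi g' t k hj ui uj /\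
                             r g t k hj ui uj = r g' t k hj ui uj) /\
    (* codomains Delta(H_{t+1}^j) and [-1,1] *)
    (forall g t k hj ui uj, valid_profile g ->
       ((t.+1 < horizon G)%N -> is_dist (Pi g t k hj ui uj)) /\
       ((t < horizon G)%N -> -1 <= r g t k hj ui uj <= 1)) /\
    (forall g, valid_profile g ->
      (* (1) *)
      (forall t (hi : Hist i t) (hj : Hist j t) (ui : U G t i) (uj : U G t j)
              (hj' : Hist j t.+1),
         (t.+1 < horizon G)%N ->
         0 < Ex g (fun x h u w => ind (cond_ev hi hj ui uj x h u w)) ->
         Ex g (fun x h u w => ind (cond_ev hi hj ui uj x h u w &&
                   (next_hist h u (dyn G t x u w).2 j == hj')))
           / Ex g (fun x h u w => ind (cond_ev hi hj ui uj x h u w))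
         = Pi g t (compress C hi) hj ui uj hj') /\
      (* (2) *)
      (forall t (hi : Hist i t) (hj : Hist j t) (ui : U G t i) (uj : U G t j),
         (t < horizon G)%N ->
         0 < Ex g (fun x h u w => ind (cond_ev hi hj ui uj x h u w)) ->
         Ex g (fun x h u w => ind (cond_ev hi hj ui uj x h u w) * rew G t x u w j)
           / Ex g (fun x h u w => ind (cond_ev hi hj ui uj x h u w))
         = r g t (compress C hi) hj ui uj)).
Proof.
move=> vG usi j hji.
exact: (@main R G i C j hji vG usi).
Qed.
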